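(* For every skew-symmetrizable seed datum $(P,Q)$ there exist skew-symmetrizable seed data $(P',Q')$ and $(P'',Q'')$ and integral linear morphisms $$(P,Q)\xrightarrow{\;A\;}(P',Q')\xleftarrow{\;B\;}(P'',Q'')$$ such that $A$ is injective, $B$ is surjective, and $(P'',Q'')$ is saturated-injective.
   Context: Seed data. A skew-symmetrizable seed datum $(P,Q)$ of rank $r$ consists of: mutually dual finite-rank lattices $M,N$ (pairing $m\cdot n$); homomorphisms $P:\mathbb Z^r\to M$, $Q:\mathbb Z^r\to N$ with $Qe_i\neq0$ for each standard basis vector $e_i$; a lattice $N^\bullet$ such that $N,N^\bullet$ are finite-index sublattices of a common lattice, with dual lattice $M^\bullet$; a diagonal matrix $D=\operatorname{diag}(d_1,\dots,d_r)$, $d_i\in\mathbb Q_{>0}$; and a homomorphism $Q^\bullet:\mathbb Z^r\to N^\bullet$ with $Q=Q^\bullet\circ D$ (maps extended $\mathbb Q$-linearly), such that $B^\bullet_{ij}=(Pe_j)\cdot(Q^\bullet e_i)$ is skew-symmetric. Linear morphisms. For seed data $(P,Q)$ (lattices $M,N$) and $(P',Q')$ (lattices $M',N'$) of the same rank $r$ and same $D$, an integral linear morphism is a homomorphism $A:M\to M'$ with $AP=P'$ and $A^\top Q'=Q$, where $A^\top:N'\to N$ is the adjoint. A homomorphism of lattices is saturated if its image is a saturated sublattice (the quotient by it is torsion-free). $(P,Q)$ is saturated-injective if $P$ and $Q$ are both saturated injections. *)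

(* Defs.v *)
From HB Require Import structures.
From mathcomp Require Import all_boot all_order all_algebra.
Set Implicit Arguments. Unset Strict Implicit. Unset Printing Implicit Defensive.
Import Order.TTheory GRing.Theory Num.Theory.
Local Open Scope ring_scope.

(* Conventions:
   - The lattice M of rank n is Z^n = 'cV[int]_n; its dual N is also
     'cV[int]_n with the standard pairing m . n = m^T n.
   - P : Z^r -> M and Q : Z^r -> N are integer n x r matrices (columns = images
     of the standard basis vectors).
   - N_Q = Q^n.  The lattice N^bullet (commensurable with N, i.e. a full-rank
     lattice in N_Q) is given by an invertible rational basis matrix Nb:
     N^bullet = Nb *m Z^n.  Q^bullet : Z^r -> N^bullet is given by its
     coordinate matrix Qb w.r.t. this basis, so in N-coordinates
     Q^bullet = Nb *m Qb.
   - D = diag(d) with d : 'rV[rat]_r, all entries > 0. *)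

Definition intQ {m n} (A : 'M[int]_(m, n)) : 'M[rat]_(m, n) :=
  map_mx (fun x : int => x%:~R) A.

Record seed_datum (r : nat) := SeedDatum {
  sd_rank : nat;
  sd_P : 'M[int]_(sd_rank, r);
  sd_Q : 'M[int]_(sd_rank, r);
  sd_Q_nz : forall i : 'I_r, col i sd_Q != 0;
  sd_Nb : 'M[rat]_sd_rank;
  sd_Nb_unit : sd_Nb \in unitmx;
  sd_d : 'rV[rat]_r;
  sd_d_pos : forall i : 'I_r, 0 < sd_d 0 i;
  sd_Qb : 'M[int]_(sd_rank, r);
  sd_Q_eq : intQ sd_Q = (sd_Nb *m intQ sd_Qb) *m diag_mx sd_d;
  sd_skew : let Bb := (sd_Nb *m intQ sd_Qb)^T *m intQ sd_P in
            Bb^T = - Bb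
}.

Definition integral_linear_morphism {r : nat} (S S' : seed_datum r)
    (A : 'M[int]_(sd_rank S', sd_rank S)) : Prop :=
  [/\ sd_d S = sd_d S', A *m sd_P S = sd_P S' & A^T *m sd_Q S' = sd_Q S].

Definition int_injective {m n} (A : 'M[int]_(m, n)) : Prop :=
  forall v : 'cV[int]_n, A *m v = 0 -> v = 0.

Definition int_surjective {m n} (A : 'M[int]_(m, n)) : Prop :=
  forall w : 'cV[int]_m, exists v : 'cV[int]_n, A *m v = w.

(* image is saturated: Z^m / im A is torsion-free *)
Definition int_saturated {m n} (A : 'M[int]_(m, n)) : Prop :=
  forall (w : 'cV[int]_m) (k : int), k != 0 ->
    (exists v : 'cV[int]_n, A *m v = k *: w) ->
    exists u : 'cV[int]_n, A *m u = w.

Definition saturated_injective (r : nat) (S : seed_datum r) : Prop :=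
  [/\ int_injective (sd_P S), int_saturated (sd_P S),
      int_injective (sd_Q S) & int_saturated (sd_Q S)].
Arguments integral_linear_morphism {r} S S' A.

(* Main.v *)
Require Import Defs.
From mathcomp Require Import all_boot all_order all_algebra.
Import Order.TTheory GRing.Theory Num.Theory.
Local Open Scope ring_scope.

Lemma intQ_col {m1 m2 n} (A : 'M[int]_(m1, n)) (B : 'M[int]_(m2, n)) :
  intQ (col_mx A B) = col_mx (intQ A) (intQ B).
Proof. by rewrite /intQ map_col_mx. Qed.

Lemma intQ1 n : intQ (1%:M : 'M[int]_n) = 1%:M.
Proof. by apply/matrixP=> i j; rewrite !mxE; case: (i == j). Qed.

Lemma intQ0 m n : intQ (0 : 'M[int]_(m, n)) = 0.
Proof. by apply/matrixP=> i j; rewrite !mxE. Qed.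

Lemma scale_cancel m n (k : int) (x y : 'M[int]_(m, n)) :
  k != 0 -> k *: x = k *: y -> x = y.
Proof.
move=> k0 /matrixP H; apply/matrixP=> i j; have := H i j; rewrite !mxE.
exact: mulfI.
Qed.

Lemma linv_inj m n (C : 'M[int]_(m, n)) (L : 'M[int]_(n, m)) :
  L *m C = 1%:M -> int_injective C /\ int_saturated C.
Proof.
move=> LC; split.
  by move=> v Cv; rewrite -[v]mul1mx -LC -mulmxA Cv mulmx0.
move=> w k k0 [v Cv]; exists (L *m w).
apply: (@scale_cancel _ _ k _ _ k0); rewrite !scalemxAr -Cv (mulmxA L) LC mul1mx.
done.
Qed.

Section Constr.
Variables (r : nat) (S : seed_datum r).
Let n := sd_rank S.
Let P := sd_P S.
Let Q := sd_Q S.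
Let Nb := sd_Nb S.
Let d := sd_d S.
Let Qb := sd_Qb S.
Let e : 'rV[rat]_r := \row_i (d 0 i)^-1.

Definition P1 : 'M[int]_(n + r, r) := col_mx P 0.
Definition Q1 : 'M[int]_(n + r, r) := col_mx Q 1%:M.
Definition Nb1 : 'M[rat]_(n + r) := block_mx Nb 0 0 (diag_mx e).
Definition Qb1 : 'M[int]_(n + r, r) := col_mx Qb 1%:M.

Lemma ed : diag_mx e *m diag_mx d = 1%:M.
Proof.
rewrite mulmx_diag; apply/matrixP=> i j; rewrite !mxE.
case: (i == j); last by rewrite mulr0n.
by rewrite mulr1n mulVf // gt_eqF // (sd_d_pos S).
Qed.

Lemma Q1_nz i : col i Q1 != 0.
Proof.
apply/eqP=> /matrixP /(_ (rshift n i) 0); rewrite mxE col_mxEd !mxE eqxx.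
by [].
Qed.

Lemma Nb1_unit : Nb1 \in unitmx.
Proof.
have [Nbu _] : Nb \in unitmx /\ true by split => //; exact: sd_Nb_unit.
have H : Nb1 *m block_mx (invmx Nb) 0 0 (diag_mx d) = 1%:M.
  rewrite mulmx_block !mulmx0 !mul0mx !addr0 !add0r mulmxV // ed.
  by rewrite -scalar_mx_block.
by case: (mulmx1_unit H).
Qed.

Lemma Q1_eq : intQ Q1 = (Nb1 *m intQ Qb1) *m diag_mx d.
Proof.
rewrite /Q1 /Qb1 /Nb1 !intQ_col intQ1 mul_block_col !mul0mx addr0 add0r mulmx1.
by rewrite mul_col_mx ed -(sd_Q_eq S).
Qed.

Lemma skew1 : let Bb := (Nb1 *m intQ Qb1)^T *m intQ P1 in Bb^T = - Bb.
Proof.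
rewrite /= /P1 /Qb1 /Nb1 !intQ_col intQ1 intQ0 mul_block_col !mul0mx addr0 add0r.
rewrite mulmx1 tr_col_mx mul_row_col mulmx0 addr0.
exact: (sd_skew S).
Qed.

Definition S1 : seed_datum r :=
  @SeedDatum r (n + r) P1 Q1 Q1_nz Nb1 Nb1_unit d (sd_d_pos S) Qb1 Q1_eq skew1.

Definition P2 : 'M[int]_(r + (n + r), r) := col_mx 1%:M P1.
Definition Q2 : 'M[int]_(r + (n + r), r) := col_mx 0 Q1.
Definition Nb2 : 'M[rat]_(r + (n + r)) := block_mx 1%:M 0 0 Nb1.
Definition Qb2 : 'M[int]_(r + (n + r), r) := col_mx 0 Qb1.

Lemma Q2_nz i : col i Q2 != 0.
Proof.
apply/eqP=> /matrixP /(_ (rshift r (rshift n i)) 0); rewrite mxE !col_mxEd !mxE eqxx.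
by [].
Qed.

Lemma Nb2_unit : Nb2 \in unitmx.
Proof.
have H : Nb2 *m block_mx 1%:M 0 0 (invmx Nb1) = 1%:M.
  rewrite mulmx_block !mulmx0 !mul0mx !addr0 !add0r mulmxV ?Nb1_unit // mulmx1.
  by rewrite -scalar_mx_block.
by case: (mulmx1_unit H).
Qed.

Lemma Q2_eq : intQ Q2 = (Nb2 *m intQ Qb2) *m diag_mx d.
Proof.
rewrite /Q2 /Qb2 /Nb2 (intQ_col _ Q1) (intQ_col _ Qb1) !intQ0 mul_block_col !mul0mx addr0 add0r mul1mx.
by rewrite mul_col_mx mul0mx Q1_eq.
Qed.

Lemma skew2 : let Bb := (Nb2 *m intQ Qb2)^T *m intQ P2 in Bb^T = - Bb.
Proof.
rewrite /= /P2 /Qb2 /Nb2 (intQ_col _ P1) (intQ_col _ Qb1) intQ1 intQ0 mul_block_col !mul0mx addr0 add0r mulmx0.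
rewrite tr_col_mx mul_row_col trmx0 mul0mx add0r.
exact: skew1.
Qed.

Definition S2 : seed_datum r :=
  @SeedDatum r (r + (n + r)) P2 Q2 Q2_nz Nb2 Nb2_unit d (sd_d_pos S) Qb2 Q2_eq skew2.

End Constr.

Theorem mainTheorem16 (r : nat) (S : seed_datum r) :
  exists (S' S'' : seed_datum r)
         (A : 'M[int]_(sd_rank S', sd_rank S))
         (B : 'M[int]_(sd_rank S', sd_rank S'')),
    [/\ integral_linear_morphism S S' A,
        integral_linear_morphism S'' S' B,
        int_injective A,
        int_surjective B &
        saturated_injective S''].
Proof.
exists (@S1 r S), (@S2 r S).
exists (col_mx 1%:M 0), (row_mx 0 1%:M); split.
- split => //=; rewrite /P1 /Q1.
    by rewrite mul_col_mx mul1mx mul0mx.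
  by rewrite tr_col_mx trmx1 trmx0 mul_row_col mul1mx mul0mx addr0.
- split => //=; rewrite /P2 /Q2.
    by rewrite mul_row_col mul0mx add0r mul1mx.
  by rewrite tr_row_mx trmx1 trmx0 mul_col_mx mul1mx mul0mx.
- by apply: (proj1 (@linv_inj _ _ _ (row_mx 1%:M 0) _));
    rewrite mul_row_col mul1mx mul0mx addr0.
- by move=> w; exists (col_mx 0 w); rewrite mul_row_col mul0mx add0r mul1mx.
- have [h1 h2] := @linv_inj _ _ (sd_P (@S2 r S)) (row_mx 1%:M 0)
    ltac:(by rewrite /= /P2 mul_row_col mul1mx mul0mx addr0).
  have [h3 h4] := @linv_inj _ _ (sd_Q (@S2 r S))
    (row_mx 0 (row_mx 0 1%:M))
    ltac:(by rewrite /= /Q2 /Q1 !mul_row_col !mul0mx !add0r mul1mx).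
  by split.
Qed.
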